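(* Under the standing assumptions, the commutator of $R^\beta$ in $R$ satisfies $$V_R(R^\beta)=\bigoplus_{g\in\mathcal G}J_g,$$ i.e. $V_R(R^\beta)=\sum_{g\in\mathcal G}J_g$ and this sum of $C(R)$-submodules of $R$ is direct.
   Context: All rings and algebras are associative and unital. A groupoid is a nonempty set $\mathcal G$ with a partially defined associative multiplication in which every $g$ has an inverse $g^{-1}$, a left identity $r(g)=gg^{-1}$ and a right identity $d(g)=g^{-1}g$; $gh$ is defined iff $d(g)=r(h)$; $\mathcal G_0$ is the set of identities. Standing assumptions: $K$ is a commutative ring, $R$ a $K$-algebra, $\mathcal G$ a finite groupoid, $\beta=(\{E_g\}_{g\in\mathcal G},\{\beta_g\}_{g\in\mathcal G})$ a unital action of $\mathcal G$ on $R$, meaning: for each $g$, $E_g=E_{r(g)}$ is an ideal of $R$ which is a unital ring with identity $1_g$ (so $1_{g^{-1}}=1_{d(g)}$), $\beta_g:E_{g^{-1}}\to E_g$ is a $K$-algebra isomorphism, $\beta_e=\mathrm{id}_{E_e}$ for $e\in\mathcal G_0$, and $\beta_g\beta_h(x)=\beta_{gh}(x)$ whenever $d(g)=r(h)$, $x\in E_{h^{-1}}$. Moreover $R=\bigoplus_{e\in\mathcal G_0}E_e$, and $R$ is a $\beta$-Galois extension of $R^\beta=\{r\in R:\beta_g(r1_{g^{-1}})=r1_g\ \forall g\in\mathcal G\}$, i.e. there exist $x_1,\dots,x_m,y_1,\dots,y_m\in R$ with $\sum_i x_i\beta_g(y_i1_{g^{-1}})=1_g$ if $g\in\mathcal G_0$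 and $=0$ otherwise. $C(R)$ is the center of $R$; for subrings $S_1,S_2$ of $R$, $V_{S_2}(S_1)=\{r\in S_2: rs=sr\ \forall s\in S_1\}$. For $g\in\mathcal G$, $J_g=\{r\in E_g: r\beta_g(x1_{g^{-1}})=xr \text{ for all } x\in R\}$, a $C(R)$-submodule of $R$. *)

(* Defs.v *)
From HB Require Import structures.
From mathcomp Require Import all_boot all_order all_algebra.
Set Implicit Arguments. Unset Strict Implicit. Unset Printing Implicit Defensive.
Import GRing.Theory.
Local Open Scope ring_scope.

(* The multiplication [gmul] and
   inverse [ginv] are total functions; [gmul g h] is only meaningful when
   d(g) = r(h), where r(g) = g g^{-1} and d(g) = g^{-1} g. *)
Record groupoid (G : finType) := Groupoid {
  gmul : G -> G -> G;
  ginv : G -> G;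
  gr := fun g => gmul g (ginv g);
  gd := fun g => gmul (ginv g) g;
  gd_inv : forall g, gd (ginv g) = gr g;
  gr_inv : forall g, gr (ginv g) = gd g;
  gmul_d : forall g, gmul g (gd g) = g;
  gmul_r : forall g, gmul (gr g) g = g;
  gd_mul : forall g h, gd g = gr h -> gd (gmul g h) = gd h;
  gr_mul : forall g h, gd g = gr h -> gr (gmul g h) = gr g;
  gmulA : forall g h l, gd g = gr h -> gd h = gr l ->
            gmul (gmul g h) l = gmul g (gmul h l)
}.

Definition gidents (G : finType) (Gd : groupoid G) : {pred G} :=
  fun e => [exists g, gd Gd g == e].

Definition is_ideal (R : pzRingType) (E : R -> Prop) : Prop :=
  [/\ E 0,
      forall x y, E x -> E y -> E (x + y),
      forall x, E x -> E (- x),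
      forall a x, E x -> E (a * x) &
      forall a x, E x -> E (x * a)].

Record unital_action (K : comPzRingType) (R : algType K) (G : finType)
    (Gd : groupoid G) := UnitalAction {
  actE : G -> R -> Prop;
  act1 : G -> R;
  actb : G -> R -> R;             (* g |-> beta_g : E_{g^-1} -> E_g *)
  actE_ideal : forall g, is_ideal (actE g);
  actE_r : forall g, forall x, actE g x <-> actE (gr Gd g) x;
  act1_in : forall g, actE g (act1 g);
  act1_unit : forall g x, actE g x -> act1 g * x = x /\ x * act1 g = x;
  actb_in : forall g x, actE (ginv Gd g) x -> actE g (actb g x);
  actb_add : forall g x y, actE (ginv Gd g) x -> actE (ginv Gd g) y ->
      actb g (x + y) = actb g x + actb g y;
  actb_mul : forall g x y, actE (ginv Gd g) x -> actE (ginv Gd g) y ->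
      actb g (x * y) = actb g x * actb g y;
  actb_scale : forall g (k : K) x, actE (ginv Gd g) x ->
      actb g (k *: x) = k *: actb g x;
  actb_one : forall g, actb g (act1 (ginv Gd g)) = act1 g;
  actb_inj : forall g x y, actE (ginv Gd g) x -> actE (ginv Gd g) y ->
      actb g x = actb g y -> x = y;
  actb_surj : forall g y, actE g y ->
      exists2 x, actE (ginv Gd g) x & actb g x = y;
  actb_id : forall e x, e \in gidents Gd -> actE e x -> actb e x = x;
  actb_comp : forall g h x, gd Gd g = gr Gd h -> actE (ginv Gd h) x ->
      actb g (actb h x) = actb (gmul Gd g h) x
}.

Section ActionDefs.
Variables (K : comPzRingType) (R : algType K) (G : finType) (Gd : groupoid G)
  (b : unital_action R Gd).

Definition action_decomposes : Prop :=
  (forall x : R, exists2 xs : G -> R,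
      (forall e, e \in gidents Gd -> actE b e (xs e)) &
      x = \sum_(e in gidents Gd) xs e) /\
  (forall xs : G -> R, (forall e, e \in gidents Gd -> actE b e (xs e)) ->
      \sum_(e in gidents Gd) xs e = 0 -> forall e, e \in gidents Gd -> xs e = 0).

Definition fixed_ring (r : R) : Prop :=
  forall g, actb b g (r * act1 b (ginv Gd g)) = r * act1 b g.

Definition beta_galois : Prop :=
  exists (m : nat) (x y : 'I_m -> R), forall g,
    \sum_(i < m) x i * actb b g (y i * act1 b (ginv Gd g)) =
      (if g \in gidents Gd then act1 b g else 0).

Definition centralizer (S2 S1 : R -> Prop) (r : R) : Prop :=
  S2 r /\ forall s, S1 s -> r * s = s * r.

Definition center : R -> Prop := centralizer (fun _ => True) (fun _ => True).

Definition Jg (g : G) (r : R) : Prop :=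
  actE b g r /\
    forall x : R, r * actb b g (x * act1 b (ginv Gd g)) = x * r.

End ActionDefs.

(* Main.v *)
Require Import Defs.
From HB Require Import structures.
From mathcomp Require Import all_boot all_order all_algebra.
Import GRing.Theory.
Local Open Scope ring_scope.
Section S.
Variables (K : comPzRingType) (R : algType K) (G : finType) (Gd : groupoid G)
  (b : unital_action R Gd).
Hypothesis Hdec : action_decomposes b.

Local Notation inv := (ginv Gd).
Local Notation mul := (gmul Gd).
Local Notation r := (gr Gd).
Local Notation d := (gd Gd).
Local Notation G0 := (gidents Gd).
Local Notation E := (actE b).
Local Notation one := (act1 b).
Local Notation be := (actb b).
Let dinv g : d (inv g) = r g := gd_inv Gd g.
Let rinv g : r (inv g) = d g := gr_inv Gd g.
Let muld g : mul g (d g) = g := gmul_d Gd g.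
Let mulr g : mul (r g) g = g := gmul_r Gd g.

Lemma d_in g : d g \in G0.
Proof. by apply/existsP; exists g. Qed.
Lemma r_in g : r g \in G0.
Proof. by rewrite -dinv d_in. Qed.
Lemma id_fix e : e \in G0 -> d e = e /\ r e = e.
Proof.
move=> /existsP [g /eqP <-]; split.
  by apply: (gd_mul (dinv g)).
by rewrite (gr_mul (dinv g)) rinv.
Qed.
Lemma invK g : inv (inv g) = g.
Proof.
rewrite -[LHS](muld) dinv.
have -> : r (inv g) = mul (inv g) g by rewrite rinv.
rewrite -gmulA ?dinv ?rinv //.
have -> : mul (inv (inv g)) (inv g) = d (inv g) by [].
by rewrite dinv mulr.
Qed.
Lemma inv_id e : e \in G0 -> inv e = e.
Proof.
move=> He; have [de re] := id_fix _ He.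
by rewrite -[LHS](muld) dinv re.
Qed.

Lemma E0 g : E g 0. Proof. by case: (actE_ideal b g) => H _ _ _ _. Qed.
Lemma ED g x y : E g x -> E g y -> E g (x + y). Proof. by case: (actE_ideal b g) => _ H _ _ _; apply: H. Qed.
Lemma EN g x : E g x -> E g (- x). Proof. by case: (actE_ideal b g) => _ _ H _ _; apply: H. Qed.
Lemma EmulL g a x : E g x -> E g (a * x). Proof. by case: (actE_ideal b g) => _ _ _ H _; apply: H. Qed.
Lemma EmulR g a x : E g x -> E g (x * a). Proof. by case: (actE_ideal b g) => _ _ _ _ H; apply: H. Qed.
Lemma Esum g (I : finType) (P : pred I) (F : I -> R) :
  (forall i, P i -> E g (F i)) -> E g (\sum_(i | P i) F i).
Proof.
move=> H; elim/big_rec: _ => [|i x Pi Hx]; first exact: E0.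
by apply: ED => //; apply: H.
Qed.
Lemma oneL g x : E g x -> one g * x = x. Proof. by move=> /(act1_unit) []. Qed.
Lemma oneR g x : E g x -> x * one g = x. Proof. by move=> /(act1_unit) []. Qed.
Arguments oneL [g x]. Arguments oneR [g x].
Lemma one_in g : E g (one g). Proof. exact: act1_in. Qed.

Lemma one_eq g h : (forall x, E g x <-> E h x) -> one g = one h.
Proof.
move=> H.
have h1 : E g (one h) by apply/H; exact: one_in.
have h2 : E h (one g) by apply/H; exact: one_in.
by rewrite -(oneL h1) (oneR h2).
Qed.
Lemma one_r g : one g = one (r g).
Proof. by apply: one_eq => x; apply: (actE_r b). Qed.
Lemma one_inv g : one (inv g) = one (d g).
Proof. by rewrite one_r rinv. Qed.
Lemma E_rr g h x : r g = r h -> E g x -> E h x.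
Proof. by move=> e H; apply: (actE_r b h x).2; rewrite -e; apply: (actE_r b g x).1. Qed.
Lemma E_inv g x : E (inv g) x <-> E (d g) x.
Proof.
split=> H; first by apply: (actE_r b (d g) x).2; rewrite (id_fix _ (d_in g)).2 -rinv; apply: (actE_r b _ x).1.
by apply: (actE_r b _ x).2; rewrite rinv -(id_fix _ (d_in g)).2; apply: (actE_r b _ x).1.
Qed.

Lemma disj e f x : e \in G0 -> f \in G0 -> e != f -> E e x -> E f x -> x = 0.
Proof.
move=> He Hf nef Hx Hy.
have H := Hdec.2 (fun k => if k == e then x else if k == f then -x else 0).
have := H _ _ e He; rewrite eqxx; apply.
- move=> k _; case: eqP => [->//|_]; case: eqP => [->|_]; first exact: EN.
  exact: E0.
- rewrite (bigD1 e) //= eqxx (bigD1 f) /=; last by rewrite Hf eq_sym.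
  rewrite eq_sym (negbTE nef) eqxx big1 ?addr0 ?subrr //.
  by move=> k /andP[/andP[_ ke] kf]; rewrite (negbTE ke) (negbTE kf).
Qed.
Arguments disj [e f x].
Lemma E_mul0 e f x y : e \in G0 -> f \in G0 -> e != f -> E e x -> E f y -> x * y = 0.
Proof.
move=> He Hf nef Hx Hy; apply: (disj He Hf nef); first exact: EmulR.
exact: EmulL.
Qed.
Arguments E_mul0 [e f x y].
Lemma one_c g x : one g * x = x * one g.
Proof.
rewrite one_r; have He := r_in g; set e := r g.
have [xs Hxs ->] := Hdec.1 x.
rewrite mulr_sumr mulr_suml; apply: eq_bigr => k Hk.
case: (eqVneq k e) => [->|ne].
  by rewrite (oneL (Hxs _ He)) (oneR (Hxs _ He)).
have ne' : e != k by rewrite eq_sym.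
by rewrite (E_mul0 He Hk ne' (one_in e) (Hxs _ Hk)) (E_mul0 Hk He ne (Hxs _ Hk) (one_in e)).
Qed.
Lemma one_idem g : one g * one g = one g.
Proof. exact: oneL (one_in g). Qed.
Lemma sum_one : \sum_(e in G0) one e = 1.
Proof.
have [xs Hxs E1] := Hdec.1 1.
rewrite [RHS]E1; apply: eq_bigr => f Hf.
rewrite -[LHS]mulr1 E1 mulr_sumr (bigD1 f) //= big1 ?addr0.
  exact: oneL (Hxs _ Hf).
move=> k /andP[Hk kf]; apply: (E_mul0 Hf Hk); rewrite 1?eq_sym //.
  exact: one_in.
exact: Hxs.
Qed.

Lemma be0 g : be g 0 = 0.
Proof.
have H := actb_add (u:=b) (g:=g) (E0 (inv g)) (E0 (inv g)).
rewrite addr0 in H; move: H; rewrite -{1}[be g 0]addr0 => /addrI.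
by move=> <-.
Qed.
Lemma be_sum g (I : finType) (P : pred I) (F : I -> R) :
  (forall i, P i -> E (inv g) (F i)) ->
  be g (\sum_(i | P i) F i) = \sum_(i | P i) be g (F i).
Proof.
move=> H.
suff: E (inv g) (\sum_(i | P i) F i) /\ be g (\sum_(i | P i) F i) = \sum_(i | P i) be g (F i) by case.
apply: (big_rec2 (fun a c => E (inv g) a /\ be g a = c)).
  by split; [apply: E0 | apply: be0].
move=> i a c Pi [Ha <-]; split; first by apply: ED => //; apply: H.
by rewrite (actb_add (H i Pi) Ha).
Qed.
Lemma E1inv g x : E (inv g) (x * one (inv g)).
Proof. exact: EmulL (one_in _). Qed.
Lemma be_mul1 g x y :
  be g (x * y * one (inv g)) = be g (x * one (inv g)) * be g (y * one (inv g)).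
Proof.
rewrite -(actb_mul (E1inv g x) (E1inv g y)); congr (be g _).
symmetry; rewrite mulrA -[x * one (inv g) * y]mulrA [one (inv g) * y]one_c.
by rewrite mulrA -mulrA one_idem.
Qed.
Lemma be_fix g t y : fixed_ring b t ->
  t * be g (y * one (inv g)) = be g (t * y * one (inv g)).
Proof.
move=> Ht; rewrite be_mul1 (Ht g).
have Hin : E g (be g (y * one (inv g))) by apply: actb_in; apply: E1inv.
by rewrite -{1}(oneL Hin) mulrA.
Qed.
Lemma be_binv h z : E h z -> be h (be (inv h) z) = z.
Proof.
move=> Hz; rewrite (actb_comp (g:=h) (h:=inv h)) ?rinv ?invK //.
apply: actb_id; first exact: r_in.
exact: (actE_r b h z).1.
Qed.

Arguments be_fix [g t] y.
Variables (m : nat) (xg yg : 'I_m -> R).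
Hypothesis Hgal : forall g, \sum_(i < m) xg i * be g (yg i * one (inv g)) =
      (if g \in G0 then one g else 0).

Definition tr z := \sum_(g : G) be g (z * one (inv g)).

Lemma gal_id e : e \in G0 -> \sum_i xg i * yg i * one e = one e.
Proof.
move=> He; have := Hgal e; rewrite He inv_id // => H; rewrite -[RHS]H.
apply: eq_bigr => i _.
have Hy : E e (yg i * one e) by apply: EmulL; apply: one_in.
by rewrite (actb_id He Hy) mulrA.
Qed.
Lemma xy1 : \sum_i xg i * yg i = 1.
Proof.
rewrite -[LHS]mulr1 -sum_one mulr_sumr.
by apply: eq_bigr => e He; rewrite mulr_suml gal_id.
Qed.
Lemma E1 z : z = \sum_j xg j * tr (yg j * z).
Proof.
symmetry.
under eq_bigr => j _ do rewrite mulr_sumr.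
rewrite exchange_big /=.
transitivity (\sum_(g : G) (if g \in G0 then one g else 0) * be g (z * one (inv g))).
  apply: eq_bigr => g _; rewrite -[if _ then _ else _](Hgal g) mulr_suml; apply: eq_bigr => j _.
  by rewrite be_mul1 mulrA.
transitivity (\sum_(g : G) if g \in G0 then z * one g else 0).
  apply: eq_bigr => g _; case: ifP => Hg; last by rewrite mul0r.
  rewrite inv_id // actb_id //; last by apply: EmulL; apply: one_in.
  by apply: oneL; apply: EmulL; apply: one_in.
by rewrite -big_mkcond /= -mulr_sumr sum_one mulr1.
Qed.
Lemma K2 h : \sum_i be h (xg i * one (inv h)) * yg i * one h =
   if h \in G0 then one h else 0.
Proof.
have := congr1 (be h) (Hgal (inv h)).
rewrite invK be_sum; last first.
  by move=> i _; apply: EmulL; apply: actb_in; rewrite invK; apply: EmulL; apply: one_in.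
have H2 i : be h (xg i * be (inv h) (yg i * one h)) = be h (xg i * one (inv h)) * yg i * one h.
  have Hy : E h (yg i * one h) by apply: EmulL; apply: one_in.
  have Hw : E (inv h) (be (inv h) (yg i * one h)) by apply: actb_in; rewrite invK.
  by rewrite -{1}(oneL Hw) mulrA (actb_mul (E1inv _ _) Hw) be_binv // mulrA.
rewrite (eq_bigr _ (fun i _ => H2 i)) => ->.
case: (boolP (h \in G0)) => Hh.
  by rewrite inv_id // Hh actb_id //; apply: one_in.
have Hi : inv h \notin G0.
  by apply/negP => Hi; apply: (negP Hh); rewrite -(invK h) (inv_id _ Hi).
by rewrite (negbTE Hi) be0.
Qed.
Lemma E2 w : w = \sum_i tr (w * xg i) * yg i.
Proof.
symmetry.
under eq_bigr => i _ do rewrite mulr_suml.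
rewrite exchange_big /=.
transitivity (\sum_(h : G) be h (w * one (inv h)) * (if h \in G0 then one h else 0)).
  apply: eq_bigr => h _; rewrite -[if _ then _ else _](K2 h) mulr_sumr; apply: eq_bigr => i _.
  rewrite be_mul1 !mulrA.
  have Ha : E h (be h (w * one (inv h)) * be h (xg i * one (inv h))).
    by apply: EmulR; apply: actb_in; apply: E1inv.
  by rewrite -[RHS]mulrA -(one_c h (yg i)) [RHS]mulrA (oneR Ha).
transitivity (\sum_(h in G0) w * one h).
  rewrite [RHS]big_mkcond; apply: eq_bigr => h _; case: ifP => Hh; last by rewrite mulr0.
  rewrite inv_id // actb_id //; last by apply: EmulL; apply: one_in.
  by rewrite -mulrA one_idem.
by rewrite -mulr_sumr sum_one mulr1.
Qed.

Lemma tr_cut z e : e \in G0 ->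
  tr z * one e = \sum_(g | r g == e) be g (z * one (inv g)).
Proof.
move=> He; rewrite /tr mulr_suml [RHS]big_mkcond; apply: eq_bigr => g _.
have Hb : E g (be g (z * one (inv g))) := actb_in (E1inv g z).
have Hbr : E (r g) (be g (z * one (inv g))) := (actE_r b g _).1 Hb.
case: eqP => [<-|ne]; first exact: oneR Hbr.
by apply: (E_mul0 (r_in g) He _ Hbr (one_in e)); apply/eqP.
Qed.
Lemma trF z : fixed_ring b (tr z).
Proof.
move=> h; rewrite one_inv tr_cut ?d_in // [one h]one_r tr_cut ?r_in //.
rewrite be_sum; last first.
  move=> g /eqP rg; apply: (E_inv h _).2; apply: (E_rr g (d h)).
    by rewrite rg (id_fix _ (d_in h)).2.
  exact: actb_in (E1inv g z).
transitivity (\sum_(g | r g == d h) be (mul h g) (z * one (inv g))).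
  apply: eq_bigr => g /eqP rg; apply: actb_comp; [by rewrite rg | exact: E1inv].
rewrite [RHS](reindex_onto (fun g => mul h g) (fun k => mul (inv h) k)) /=; last first.
  move=> k /eqP rk.
  have hk : d (inv h) = r k by rewrite dinv rk.
  rewrite -(gmulA (esym (rinv h)) hk).
  have -> : mul h (inv h) = r h by [].
  by rewrite -rk mulr.
apply: eq_big => [g|g /eqP rg].
  apply/idP/idP.
    move/eqP=> rg; have hg : d h = r g by rewrite rg.
    rewrite (gr_mul hg) eqxx /= -(gmulA (dinv h) hg).
    have -> : mul (inv h) h = d h by [].
    by rewrite hg mulr.
  case/andP => /eqP r1 /eqP e2; rewrite -e2.
  have hd : d (inv h) = r (mul h g) by rewrite r1 dinv.
  by rewrite (gr_mul hd) rinv.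
have hg : d h = r g by rewrite rg.
by rewrite !one_inv (gd_mul hg).
Qed.

Lemma delta g h : \sum_i be g (xg i * one (inv g)) * be h (yg i * one (inv h)) =
  if g == h then one g else 0.
Proof.
case: (eqVneq (r g) (r h)) => [rgh|nrgh]; last first.
  have gh : g != h by apply/eqP => e; move: nrgh; rewrite e eqxx.
  rewrite (negbTE gh) big1 // => i _.
  apply: (E_mul0 (r_in g) (r_in h) nrgh); apply: (actE_r b _ _).1; apply: actb_in; exact: E1inv.
pose k := mul (inv g) h.
have dk : d (inv g) = r h by rewrite dinv rgh.
have rk : r k = d g by rewrite /k (gr_mul dk) rinv.
have gk : mul g k = h.
  rewrite /k -(gmulA (esym (rinv g)) dk).
  have -> : mul g (inv g) = r g by [].
  by rewrite rgh mulr.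
have dgk : d g = r k by rewrite rk.
have ohk : one (inv h) = one (inv k) by rewrite !one_inv -gk (gd_mul dgk).
transitivity (be g (\sum_i xg i * be k (yg i * one (inv k)))).
  have Hw i : E (inv g) (be k (yg i * one (inv k))).
    apply: (E_inv g _).2; apply: (E_rr k (d g)).
      by rewrite rk (id_fix _ (d_in g)).2.
    exact: actb_in (E1inv k _).
  rewrite be_sum; last by move=> i _; apply: EmulL.
  apply: eq_bigr => i _.
  rewrite ohk -{1}gk -(actb_comp dgk (E1inv _ _)).
  by rewrite -(actb_mul (E1inv _ _) (Hw i)) -mulrA (oneL (Hw i)).
rewrite Hgal.
have Hk : (k \in G0) = (g == h).
  apply/idP/eqP => [Hk|egh].
    by rewrite -gk -(id_fix _ Hk).2 rk muld.
  by rewrite /k -egh; apply: d_in.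
rewrite Hk; case: eqP => [egh|_]; last by rewrite be0.
by rewrite one_r rk -one_inv actb_one.
Qed.

Lemma claim1 g a s : Jg b g a -> fixed_ring b s -> a * s = s * a.
Proof.
move=> [Ha Hj] Hs; rewrite -Hj (Hs g) -(one_c g s) mulrA (oneR Ha) //.
Qed.
Lemma claim2 v : centralizer (fun _ => True) (fixed_ring b) v ->
  exists2 a : G -> R, (forall g, Jg b g (a g)) & v = \sum_(g : G) a g.
Proof.
case=> _ Hv.
exists (fun g => \sum_i xg i * v * be g (yg i * one (inv g))).
  move=> g; split.
    by apply: Esum => i _; apply: EmulL; exact: actb_in (E1inv g _).
  move=> x.
  transitivity (\sum_j xg j * v * be g (yg j * x * one (inv g))).
    by rewrite mulr_suml; apply: eq_bigr => j _; rewrite -mulrA -be_mul1.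
  symmetry; rewrite mulr_sumr.
  transitivity (\sum_i \sum_j xg j * v * (tr (yg j * x * xg i) * be g (yg i * one (inv g)))).
    apply: eq_bigr => i _.
    rewrite !mulrA {1}(E1 (x * xg i)) !mulr_suml; apply: eq_bigr => j _.
    rewrite !mulrA -(mulrA (xg j) (tr _)) -(Hv _ (trF _)) !mulrA.
    done.
  rewrite exchange_big /=; apply: eq_bigr => j _; rewrite -mulr_sumr; congr (_ * _).
  transitivity (\sum_i be g (tr (yg j * x * xg i) * yg i * one (inv g))).
    by apply: eq_bigr => i _; apply: be_fix; apply: trF.
  rewrite -be_sum; last by move=> i _; exact: E1inv.
  by rewrite -mulr_suml -E2.
symmetry; rewrite exchange_big /=.
transitivity (\sum_i xg i * tr (yg i * 1) * v).
  apply: eq_bigr => i _; rewrite -mulr_sumr mulr1 -!mulrA; congr (_ * _).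
  exact: Hv _ (trF (yg i)).
by rewrite -mulr_suml -E1 mul1r.
Qed.
Lemma claim3 a : (forall g, Jg b g (a g)) -> \sum_(g : G) a g = 0 -> forall h, a h = 0.
Proof.
move=> Ha Hs h.
have: \sum_i xg i * (\sum_(g : G) a g) * be h (yg i * one (inv h)) = a h.
  transitivity (\sum_(g : G) a g * (if g == h then one g else 0)).
    under [RHS]eq_bigr => g _ do rewrite -delta mulr_sumr.
    rewrite exchange_big /=; apply: eq_bigr => i _.
    rewrite mulr_sumr mulr_suml; apply: eq_bigr => g _.
    by rewrite mulrA -((Ha g).2 (xg i)).
  rewrite (bigD1 h) //= eqxx big1 ?addr0; first exact: oneR (Ha h).1.
  by move=> g /negbTE ->; rewrite mulr0.
move <-; rewrite Hs big1 // => i _; by rewrite mulr0 mul0r.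
Qed.
End S.

Theorem lemma3p1 (K : comPzRingType) (R : algType K) (G : finType)
  (Gd : groupoid G) (b : unital_action R Gd)
  (Hdec : action_decomposes b) (Hgal : beta_galois b) :
  (forall v : R, centralizer (fun _ => True) (fixed_ring b) v <->
     exists2 a : G -> R, (forall g, Jg b g (a g)) & v = \sum_(g : G) a g) /\
  (forall a : G -> R, (forall g, Jg b g (a g)) ->
     \sum_(g : G) a g = 0 -> forall g, a g = 0).
Proof.
have [m [x [y Hxy]]] := Hgal.
split; last exact: (@claim3 _ _ _ _ b Hdec m x y Hxy).
move=> v; split; first exact: (@claim2 _ _ _ _ b Hdec m x y Hxy v).
case=> a Ha ->; split => // s Hs.
rewrite mulr_suml mulr_sumr; apply: eq_bigr => g _.
exact: (@claim1 _ _ _ _ b Hdec g _ _ (Ha g) Hs).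
Qed.
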